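(* For any integers $s\ge1$ and $M\ge1$ there exists $\varepsilon>0$ small enough such that on the star graph $G(s,\varepsilon)$ the following hold for the Laplacian $-\frac{\partial^2}{\partial x^2}$: (a) the first $M$ eigenvalues are all simple; (b) the first $M$ eigenfunctions are invariant under permutations of the $s$ small edges; (c) for every $n\le M$, the eigenfunction $f_n$ has exactly $n-1$ zeroes on the long edge and no zeroes on the small edges or at the inner vertex.
   Context: $G(s,\varepsilon)$ is the star graph with one central vertex, one edge of length $1$ and $s$ edges of length $\varepsilon$, each joining the central vertex to a degree-one vertex. The operator $-\frac{d^2}{dx^2}$ acts edgewise with Dirichlet conditions at the degree-one vertices and Neumann–Kirchhoff conditions at the central vertex (continuity and vanishing sum of outgoing derivatives). Eigenvalues are ordered increasingly with multiplicity, $f_n$ being an eigenfunction for the $n$-th one. Zeroes are counted away from the degree-one vertices. *)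

(* Defs.v *)
From Stdlib Require Import Reals Lra Lia Arith.
From Coquelicot Require Import Coquelicot.
Open Scope R_scope.

(* Star graph G(s,eps): edge 0 is the long edge (length 1), edges 1..s are the
   short edges (length eps).  Every edge is parametrised by the distance x to
   the central vertex, so x = 0 is the central vertex and x = len e is the
   degree-one vertex of edge e.  A function on the graph is F : nat -> R -> R,
   F e being its restriction to edge e (only e <= s, x in [0, len e] matter). *)
Definition len (eps : R) (e : nat) : R := if Nat.eqb e 0 then 1 else eps.

Definition gfun := nat -> R -> R.

Fixpoint fsum (k : nat) (g : nat -> R) : R :=
  match k with O => 0 | S k => fsum k g + g k end.

(* F lies in the (possibly trivial) solution space of -f'' = lam f with
   Dirichlet conditions at degree-one vertices and Neumann-Kirchhoff
   conditions at the central vertex. *)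
Definition in_eigspace (s : nat) (eps lam : R) (F : gfun) : Prop :=
  (forall e, (e <= s)%nat ->
     exists dF : R -> R, forall x,
       is_derive (F e) x (dF x) /\ is_derive dF x (- lam * F e x))
  /\ (forall e, (e <= s)%nat -> F e (len eps e) = 0)
  /\ (forall e, (e <= s)%nat -> F e 0 = F 0%nat 0)
  /\ fsum (S s) (fun e => Derive (F e) 0) = 0.

Definition nonzero_on_graph (s : nat) (eps : R) (F : gfun) : Prop :=
  exists e x, (e <= s)%nat /\ 0 <= x <= len eps e /\ F e x <> 0.

Definition eigfun (s : nat) (eps lam : R) (F : gfun) : Prop :=
  in_eigspace s eps lam F /\ nonzero_on_graph s eps F.

Definition indep (s : nat) (eps : R) (k : nat) (Fs : nat -> gfun) : Prop :=
  forall c : nat -> R,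
    (forall e x, (e <= s)%nat -> 0 <= x <= len eps e ->
        fsum k (fun i => c i * Fs i e x) = 0) ->
    forall i, (i < k)%nat -> c i = 0.

Definition mult_ge (s : nat) (eps lam : R) (k : nat) : Prop :=
  exists Fs : nat -> gfun,
    (forall i, (i < k)%nat -> in_eigspace s eps lam (Fs i)) /\ indep s eps k Fs.

Definition cnt_lt (s : nat) (eps mu : R) (k : nat) : Prop :=
  exists (lams : nat -> R) (Fs : nat -> gfun),
    (forall i, (i < k)%nat -> lams i < mu /\ eigfun s eps (lams i) (Fs i))
    /\ indep s eps k Fs.

Definition cnt_le (s : nat) (eps mu : R) (k : nat) : Prop :=
  exists (lams : nat -> R) (Fs : nat -> gfun),
    (forall i, (i < k)%nat -> lams i <= mu /\ eigfun s eps (lams i) (Fs i))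
    /\ indep s eps k Fs.

(* lam is the n-th eigenvalue (n >= 1), eigenvalues ordered increasingly and
   repeated according to multiplicity *)
Definition nth_eig (s : nat) (eps : R) (n : nat) (lam : R) : Prop :=
  (exists F, eigfun s eps lam F) /\ cnt_le s eps lam n /\ ~ cnt_lt s eps lam n.

Definition simple_eig (s : nat) (eps lam : R) : Prop :=
  mult_ge s eps lam 1 /\ ~ mult_ge s eps lam 2.

Definition perm_invariant (s : nat) (eps : R) (F : gfun) : Prop :=
  forall sigma : nat -> nat,
    (forall i, (1 <= i <= s)%nat -> (1 <= sigma i <= s)%nat) ->
    (forall i j, (1 <= i <= s)%nat -> (1 <= j <= s)%nat -> sigma i = sigma j -> i = j) ->
    forall i x, (1 <= i <= s)%nat -> 0 <= x <= eps -> F (sigma i) x = F i x.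

Definition exactly_zeros_long (m : nat) (F : gfun) : Prop :=
  exists z : nat -> R,
    (forall i, (i < m)%nat -> 0 < z i < 1 /\ F 0%nat (z i) = 0)
    /\ (forall i, (S i < m)%nat -> z i < z (S i))
    /\ (forall x, 0 < x < 1 -> F 0%nat x = 0 -> exists i, (i < m)%nat /\ x = z i).

Definition no_zeros_small (s : nat) (eps : R) (F : gfun) : Prop :=
  F 0%nat 0 <> 0 /\
  forall e x, (1 <= e <= s)%nat -> 0 <= x < eps -> F e x <> 0.

(* Main.v *)
Require Import Defs.
From Stdlib Require Import Reals Lra Lia.
From Coquelicot Require Import Coquelicot.
Open Scope R_scope.

Lemma der_mul (f g : R -> R) x df dg :
  is_derive f x df -> is_derive g x dg ->
  is_derive (fun t => f t * g t) x (df * g x + f x * dg).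
Proof. intros. apply (is_derive_mult f g x df dg); auto. intros; apply Rmult_comm. Qed.

Lemma der_add (f g : R -> R) x df dg :
  is_derive f x df -> is_derive g x dg ->
  is_derive (fun t => f t + g t) x (df + dg).
Proof. intros. apply (is_derive_plus f g x df dg); auto. Qed.

Lemma der_sub (f g : R -> R) x df dg :
  is_derive f x df -> is_derive g x dg ->
  is_derive (fun t => f t - g t) x (df - dg).
Proof. intros. apply (is_derive_minus f g x df dg); auto. Qed.

Lemma der_ext (f : R -> R) (x l l' : R) : is_derive f x l -> l = l' -> is_derive f x l'.
Proof. intros; subst; auto. Qed.

Lemma const_of_der0 (f : R -> R) : (forall x, is_derive f x 0) -> forall x y, f x = f y.
Proof.
  intros H x y. destruct (Rtotal_order x y) as [h|[h|h]].
  - apply (eq_is_derive f x y). intros; apply H. exact h.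
  - subst; reflexivity.
  - symmetry; apply (eq_is_derive f y x). intros; apply H. exact h.
Qed.

Lemma der_sin_lin k L x : is_derive (fun t => sin (k * (L - t))) x (- k * cos (k * (L - x))).
Proof. auto_derive; [exact I|]. unfold Rminus; ring. Qed.
Lemma der_cos_lin k L x : is_derive (fun t => cos (k * (L - t))) x (k * sin (k * (L - x))).
Proof. auto_derive; [exact I|]. unfold Rminus; ring. Qed.

Lemma wronskian (F dF : R -> R) (k L : R) : 0 < k ->
  (forall x, is_derive F x (dF x) /\ is_derive dF x (- (k*k) * F x)) ->
  F L = 0 -> forall x, F x = (- dF L / k) * sin (k * (L - x)).
Proof.
  intros hk H hL.
  set (v := fun t => sin (k * (L - t))). set (w := fun t => cos (k * (L - t))).
  set (W1 := fun t => - k * F t * w t - dF t * v t).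
  set (W2 := fun t => k * F t * v t - dF t * w t).
  assert (D1 : forall x, is_derive W1 x 0).
  { intro x. destruct (H x) as [h1 h2]. unfold W1.
    eapply der_ext.
    apply der_sub. apply der_mul. apply is_derive_scal. exact h1. apply der_cos_lin.
    apply der_mul. exact h2. apply der_sin_lin.
    unfold v, w. change (@eq R (- k * dF x * cos (k * (L - x)) + - k * F x * (k * sin (k * (L - x))) - (- (k * k) * F x * sin (k * (L - x)) + dF x * (- k * cos (k * (L - x))))) 0). ring. }
  assert (D2 : forall x, is_derive W2 x 0).
  { intro x. destruct (H x) as [h1 h2]. unfold W2.
    eapply der_ext.
    apply der_sub. apply der_mul. apply is_derive_scal. exact h1. apply der_sin_lin.
    apply der_mul. exact h2. apply der_cos_lin.
    unfold v, w. ring. }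
  intro x.
  pose proof (const_of_der0 W1 D1 x L) as E1.
  pose proof (const_of_der0 W2 D2 x L) as E2.
  unfold W1, W2, v, w in *. rewrite Rminus_diag, Rmult_0_r, sin_0, cos_0, hL in *.
  assert (Hsc := sin2_cos2 (k * (L - x))). unfold Rsqr in Hsc.
  apply (Rmult_eq_reg_l k); [|lra].
  field_simplify; [|lra].
  set (S := sin (k * (L - x))) in *. set (C := cos (k * (L - x))) in *.
  assert (F x * k * (S*S + C*C) = - dF L * S).
  { replace (F x * k * (S*S + C*C)) with (S * (k * F x * S - dF x * C) - C * (- k * F x * C - dF x * S)) by ring.
    rewrite E1, E2. ring. }
  rewrite Hsc in H0. lra.
Qed.

Lemma fsum_ext k g g' : (forall i, (i < k)%nat -> g i = g' i) -> fsum k g = fsum k g'.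
Proof. induction k; simpl; intros; auto. rewrite IHk by (intros; apply H; lia). rewrite H by lia. auto. Qed.

Lemma fsum_const_tail s g C : (forall e, (1 <= e <= s)%nat -> g e = C) ->
  fsum (S s) g = g 0%nat + INR s * C.
Proof.
  induction s; intros H.
  - simpl. ring.
  - change (fsum (S (S s)) g) with (fsum (S s) g + g (S s)).
    rewrite IHs by (intros; apply H; lia). rewrite (H (S s)) by lia. rewrite S_INR. ring.
Qed.

Lemma Derive_sin_lin A k L : Derive (fun x => A * sin (k * (L - x))) 0 = - A * k * cos (k * L).
Proof.
  apply is_derive_unique. eapply der_ext. apply is_derive_scal. apply der_sin_lin.
  rewrite Rminus_0_r. ring.
Qed.

Definition Phi (eps k : R) : gfun := fun e x =>
  if Nat.eqb e 0 then sin (k*eps) * sin (k*(1-x)) else sin k * sin (k*(eps-x)).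
Definition hh (s : nat) (eps k : R) := cos k * sin (k*eps) + INR s * sin k * cos (k*eps).

Lemma classify s eps k F : 0 < k -> 0 < sin (k*eps) -> in_eigspace s eps (k*k) F ->
  exists c, (forall e x, (e <= s)%nat -> F e x = c * Phi eps k e x) /\ c * hh s eps k = 0.
Proof.
  intros hk hse [Hd [Hb [Hc Hk]]].
  assert (HA : forall e, (e <= s)%nat -> exists A, forall x, F e x = A * sin (k * (len eps e - x))).
  { intros e he. destruct (Hd e he) as [dF HdF].
    exists (- dF (len eps e) / k). apply wronskian; auto. }
  destruct (HA 0%nat ltac:(lia)) as [A0 HA0]. unfold len in HA0; simpl in HA0.
  set (c := A0 / sin (k*eps)).
  assert (Hsm : forall e x, (1 <= e <= s)%nat -> F e x = c * sin k * sin (k*(eps - x))).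
  { intros e x he. destruct (HA e ltac:(lia)) as [Ae HAe].
    assert (le : len eps e = eps). { unfold len. destruct e; [lia|reflexivity]. }
    rewrite le in HAe. rewrite HAe.
    assert (E := Hc e ltac:(lia)). rewrite HAe, HA0 in E. rewrite !Rminus_0_r, Rmult_1_r in E.
    assert (Ae = c * sin k). { unfold c. apply (Rmult_eq_reg_r (sin (k*eps))); [|lra]. field_simplify; lra. }
    rewrite H. ring. }
  exists c. split.
  - intros e x he. unfold Phi. destruct (Nat.eqb_spec e 0).
    + subst. rewrite HA0. unfold c. field. lra.
    + rewrite Hsm by lia. ring.
  - rewrite (fsum_const_tail s _ (- (c * sin k) * k * cos (k * eps))) in Hk.
    + rewrite (Derive_ext _ _ 0 HA0), Derive_sin_lin in Hk.
      unfold hh. replace A0 with (c * sin (k*eps)) in Hk by (unfold c; field; lra).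
      apply (Rmult_eq_reg_l (-k)); [|lra]. rewrite Rmult_0_r. rewrite <- Hk at 1. rewrite Rmult_1_r. ring.
    + intros e he. rewrite (Derive_ext _ (fun x => (c * sin k) * sin (k * (eps - x))) 0).
      apply Derive_sin_lin. intro t. rewrite Hsm by lia. ring.
Qed.

Lemma Phi_eig s eps k : hh s eps k = 0 -> in_eigspace s eps (k*k) (Phi eps k).
Proof.
  intros H. unfold in_eigspace. split; [|split; [|split]].
  - intros e he. unfold Phi. destruct (Nat.eqb e 0).
    + exists (fun x => sin (k*eps) * (- k * cos (k * (1 - x)))). intro x. split.
      * apply is_derive_scal, der_sin_lin.
      * eapply der_ext. apply is_derive_scal. apply is_derive_scal. apply der_cos_lin. ring.
    + exists (fun x => sin k * (- k * cos (k * (eps - x)))). intro x. split.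
      * apply is_derive_scal, der_sin_lin.
      * eapply der_ext. apply is_derive_scal. apply is_derive_scal. apply der_cos_lin. ring.
  - intros e he. unfold Phi, len. destruct (Nat.eqb e 0); rewrite Rminus_diag, Rmult_0_r, sin_0; ring.
  - intros e he. unfold Phi. destruct (Nat.eqb e 0); simpl; unfold Rminus; rewrite ?Ropp_0, ?Rplus_0_r, ?Rmult_1_r; ring.
  - rewrite (fsum_const_tail s _ (- sin k * k * cos (k * eps))).
    + unfold Phi at 1. simpl. rewrite Derive_sin_lin, Rmult_1_r.
      transitivity (- k * hh s eps k). unfold hh; ring. rewrite H; ring.
    + intros e he. unfold Phi. destruct (Nat.eqb_spec e 0); [lia|]. apply Derive_sin_lin.
Qed.

Lemma mono_of_der (f df : R -> R) : (forall x, is_derive f x (df x)) -> (forall x, 0 <= df x) ->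
  forall a b, a <= b -> f a <= f b.
Proof.
  intros Hd Hp a b hab.
  destruct (MVT_gen f a b df) as [c [hc E]].
  - intros; apply Hd.
  - intros x _. apply continuity_pt_filterlim. apply (ex_derive_continuous (K:=R_AbsRing) (V:=R_NormedModule)). exists (df x). apply Hd.
  - assert (0 <= df c * (b - a)) by (apply Rmult_le_pos; [apply Hp|lra]). lra.
Qed.

Lemma fsum_scal k c g : fsum k (fun i => c * g i) = c * fsum k g.
Proof. induction k; simpl; [ring|rewrite IHk; ring]. Qed.

Lemma fsum_nonpos_zero k g : (forall i, (i < k)%nat -> g i <= 0) -> fsum k g = 0 ->
  forall i, (i < k)%nat -> g i = 0.
Proof.
  induction k; intros H E i hi; [lia|].
  assert (Hle : forall j, fsum j g <= 0 \/ (k < j)%nat).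
  { induction j; simpl. left; lra. destruct IHj. destruct (Nat.lt_ge_cases j (S k)).
    left. assert (g j <= 0) by (apply H; lia). lra. right; lia. right; lia. }
  simpl in E. destruct (Hle k) as [h|h]; [|lia].
  assert (g k <= 0) by (apply H; lia).
  destruct (Nat.eq_dec i k). subst. lra.
  apply IHk. intros; apply H; lia. lra. lia.
Qed.

Lemma len_pos eps e : 0 < eps -> 0 < len eps e.
Proof. intros. unfold len. destruct (Nat.eqb e 0); lra. Qed.

Lemma nonpos_eig s eps lam F : 0 < eps -> lam <= 0 -> in_eigspace s eps lam F ->
  forall e x, (e <= s)%nat -> 0 <= x <= len eps e -> F e x = 0.
Proof.
  intros heps hlam [Hd [Hb [Hc Hk]]].
  assert (HE : forall e, (e <= s)%nat -> forall a b, a <= b ->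
     F e a * Derive (F e) a <= F e b * Derive (F e) b).
  { intros e he a b hab. destruct (Hd e he) as [dF HdF].
    assert (DD : forall t, Derive (F e) t = dF t) by (intro t; apply is_derive_unique, HdF).
    rewrite !DD.
    apply (mono_of_der (fun t => F e t * dF t) (fun t => dF t * dF t + F e t * (- lam * F e t))); auto.
    - intro t. apply der_mul; apply HdF.
    - intro t. nra. }
  assert (H0 : forall e, (e <= s)%nat -> F e 0 * Derive (F e) 0 <= 0).
  { intros e he. apply Rle_trans with (F e (len eps e) * Derive (F e) (len eps e)).
    apply HE; auto. left; apply len_pos; auto. rewrite (Hb e he); lra. }
  assert (Hsum : fsum (S s) (fun e => F e 0 * Derive (F e) 0) = 0).
  { rewrite (fsum_ext _ _ (fun e => F 0%nat 0 * Derive (F e) 0)).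
    rewrite fsum_scal, Hk; ring. intros i hi. rewrite Hc by lia. auto. }
  assert (Z0 : forall e, (e <= s)%nat -> F e 0 * Derive (F e) 0 = 0).
  { intros e he. apply (fsum_nonpos_zero (S s) (fun e => F e 0 * Derive (F e) 0)); auto.
    intros; apply H0; lia. lia. }
  intros e x he hx.
  destruct (Hd e he) as [dF HdF].
  assert (DD : forall t, Derive (F e) t = dF t) by (intro t; apply is_derive_unique, HdF).
  assert (Ez : forall t, 0 <= t <= len eps e -> F e t * dF t = 0).
  { intros t ht. rewrite <- DD. apply Rle_antisym.
    - apply Rle_trans with (F e (len eps e) * Derive (F e) (len eps e)).
      apply HE; auto; lra. rewrite (Hb e he); lra.
    - rewrite <- (Z0 e he). apply HE; auto; lra. }
  destruct (Req_dec x (len eps e)) as [hxl|hxl].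
  - rewrite hxl. apply Hb; auto.
  - assert (G : F e x * F e x = F e (len eps e) * F e (len eps e)).
    { apply (eq_is_derive (fun t => F e t * F e t) x (len eps e)); [|lra].
      intros t ht. eapply der_ext. apply der_mul; apply HdF.
      assert (F e t * dF t = 0) by (apply Ez; lra). replace (@zero R_NormedModule) with 0 by reflexivity. nra. }
    rewrite Hb in G by auto. nra.
Qed.

Lemma fsum_add k g h : fsum k (fun i => g i + h i) = fsum k g + fsum k h.
Proof. induction k; simpl; [ring|rewrite IHk; ring]. Qed.

Lemma fsum_zero k g : (forall i, (i < k)%nat -> g i = 0) -> fsum k g = 0.
Proof. intros H. rewrite (fsum_ext _ _ (fun i => 0 * 0)). rewrite fsum_scal; ring. intros; rewrite H; auto; ring. Qed.

Lemma der_fsum m (g : nat -> R -> R) (dg : nat -> R) x :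
  (forall j, is_derive (g j) x (dg j)) -> is_derive (fun y => fsum m (fun j => g j y)) x (fsum m dg).
Proof.
  intros H. induction m; simpl.
  - apply (is_derive_const (V := R_NormedModule) 0 x).
  - apply der_add; auto.
Qed.

Lemma deriv_zero_open (f : R -> R) al be x l : (forall y, al < y < be -> f y = 0) ->
  al < x < be -> is_derive f x l -> l = 0.
Proof.
  intros H hx hd.
  assert (Ho : open (fun y => al < y /\ y < be)) by (apply open_and; [apply open_gt|apply open_lt]).
  assert (Hl : locally x (fun t => f t = 0)).
  { apply filter_imp with (fun y => al < y /\ y < be). intros; apply H; auto. apply Ho; auto. }
  assert (hd2 : is_derive (fun _ => 0) x l) by (eapply is_derive_ext_loc; eauto).
  apply is_derive_unique in hd2. rewrite <- hd2. apply is_derive_unique.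
  apply (is_derive_const (V := R_NormedModule) 0 x).
Qed.

Lemma sin_indep n : forall (a k : nat -> R) al be, al < be ->
  (forall i, (i < n)%nat -> 0 < k i) -> (forall i j, (i < j < n)%nat -> k i < k j) ->
  (forall y, al < y < be -> fsum n (fun j => a j * sin (k j * y)) = 0) ->
  forall j, (j < n)%nat -> a j = 0.
Proof.
  induction n; intros a k al be hab hk hinc H j hj; [lia|].
  set (f := fun y => fsum (S n) (fun j => a j * sin (k j * y))).
  set (f1 := fun y => fsum (S n) (fun j => a j * (k j * cos (k j * y)))).
  assert (D0 : forall y, is_derive f y (f1 y)).
  { intro y. unfold f, f1. apply (der_fsum (S n) (fun j y => a j * sin (k j * y))).
    intro i. apply is_derive_scal. auto_derive; auto. ring. }
  assert (D1 : forall y, is_derive f1 y (fsum (S n) (fun j => - a j * k j * k j * sin (k j * y)))).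
  { intro y. unfold f1. apply (der_fsum (S n) (fun j y => a j * (k j * cos (k j * y)))).
    intro i. auto_derive; auto. ring. }
  assert (Z1 : forall y, al < y < be -> f1 y = 0).
  { intros y hy. apply (deriv_zero_open f al be y); auto. }
  assert (Z2 : forall y, al < y < be -> fsum (S n) (fun j => - a j * k j * k j * sin (k j * y)) = 0).
  { intros y hy. apply (deriv_zero_open f1 al be y); auto. }
  assert (Hb : forall j, (j < n)%nat -> a j * (k n * k n - k j * k j) = 0).
  { apply (IHn _ k al be hab).
    - intros; apply hk; lia.
    - intros; apply hinc; lia.
    - intros y hy.
      assert (E : fsum (S n) (fun j => a j * (k n * k n - k j * k j) * sin (k j * y))
                 = k n * k n * f y + fsum (S n) (fun j => - a j * k j * k j * sin (k j * y))).
      { unfold f. rewrite <- fsum_scal, <- fsum_add. apply fsum_ext. intros; ring. }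
      rewrite Z2 in E by auto. unfold f in E. rewrite H in E by auto. simpl in E. rewrite Rminus_diag in E. lra. }
  assert (Ha : forall j, (j < n)%nat -> a j = 0).
  { intros i hi. specialize (Hb i hi). assert (k i < k n) by (apply hinc; lia).
    assert (0 < k i) by (apply hk; lia). apply Rmult_integral in Hb. destruct Hb; auto. nra. }
  destruct (Nat.eq_dec j n); [|apply Ha; lia]. subst j.
  set (y := (al + be) / 2).
  assert (hy : al < y < be) by (unfold y; lra).
  assert (E0 := H y hy). assert (E1 := Z1 y hy). unfold f1 in E1. simpl in E0, E1.
  rewrite fsum_zero in E0 by (intros; rewrite Ha; auto; ring).
  rewrite fsum_zero in E1 by (intros; rewrite Ha; auto; ring).
  assert (0 < k n) by (apply hk; lia).
  assert (Hsc := sin2_cos2 (k n * y)). unfold Rsqr in Hsc.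
  assert (a n * cos (k n * y) = 0).
  { apply (Rmult_eq_reg_l (k n)); [|lra]. lra. }
  nra.
Qed.

Lemma sin_shift m x : sin (x + INR m * PI) = (-1)^m * sin x.
Proof.
  induction m. simpl. rewrite Rmult_0_l, Rplus_0_r. ring.
  rewrite S_INR. replace (x + (INR m + 1) * PI) with ((x + INR m * PI) + PI) by ring.
  rewrite neg_sin, IHm. simpl. ring.
Qed.
Lemma cos_shift m x : cos (x + INR m * PI) = (-1)^m * cos x.
Proof.
  induction m. simpl. rewrite Rmult_0_l, Rplus_0_r. ring.
  rewrite S_INR. replace (x + (INR m + 1) * PI) with ((x + INR m * PI) + PI) by ring.
  rewrite neg_cos, IHm. simpl. ring.
Qed.
Lemma m1sq m : (-1)^m * (-1)^m = 1.
Proof. induction m; simpl; [ring|]. replace (-1 * (-1) ^ m * (-1 * (-1) ^ m)) with ((-1)^m * (-1)^m) by ring. auto. Qed.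

Lemma hh_cont s eps : continuity (hh s eps).
Proof. unfold hh. reg. Qed.

Lemma IVT_prod (f : R -> R) a b : continuity f -> a < b -> f a * f b < 0 ->
  exists z, a < z < b /\ f z = 0.
Proof.
  intros hc hab hp.
  destruct (Rlt_or_le (f a) 0) as [h|h].
  - assert (0 < f b) by nra.
    destruct (IVT f a b hc hab h H) as [z [hz E]].
    exists z. split; auto. split.
    + destruct (Req_dec z a); [subst; lra|lra].
    + destruct (Req_dec z b); [subst; lra|lra].
  - assert (f b < 0) by nra. assert (f a <> 0) by (intro E; rewrite E in hp; lra).
    destruct (IVT (fun t => - f t) a b (continuity_opp _ hc) hab ltac:(lra) ltac:(lra)) as [z [hz E]].
    exists z. split; [split|lra].
    + destruct (Req_dec z a); [subst; lra|lra].
    + destruct (Req_dec z b); [subst; lra|lra].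
Qed.

Lemma root_exists s eps n : (1 <= s)%nat -> 0 < eps -> (1 <= n)%nat -> INR n * eps < /2 ->
  exists k, INR n * PI - PI/2 < k < INR n * PI /\ hh s eps k = 0.
Proof.
  intros hs he hn hne.
  assert (hs' : 1 <= INR s) by (apply (le_INR 1); auto).
  assert (hn' : 1 <= INR n) by (apply (le_INR 1); auto).
  pose proof PI_RGT_0.
  apply IVT_prod. apply hh_cont. lra.
  set (a := INR n * PI - PI/2). set (b := INR n * PI).
  assert (ca : cos a = 0). { unfold a. replace (INR n * PI - PI/2) with (- (PI/2) + INR n * PI) by ring.
    rewrite cos_shift, cos_neg, cos_PI2. ring. }
  assert (sa : sin a = - (-1)^n). { unfold a. replace (INR n * PI - PI/2) with (- (PI/2) + INR n * PI) by ring.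
    rewrite sin_shift, sin_neg, sin_PI2. ring. }
  assert (sb : sin b = 0). { unfold b. replace (INR n * PI) with (0 + INR n * PI) by ring. rewrite sin_shift, sin_0; ring. }
  assert (cb : cos b = (-1)^n). { unfold b. replace (INR n * PI) with (0 + INR n * PI) by ring. rewrite cos_shift, cos_0; ring. }
  assert (hp : INR n * eps * PI < /2 * PI) by (apply Rmult_lt_compat_r; lra).
  assert (ha : 0 < a) by (unfold a; nra).
  assert (hae : 0 < a * eps) by nra.
  assert (c1 : 0 < cos (a * eps)). { apply cos_gt_0; unfold a in *; nra. }
  assert (c2 : 0 < sin (b * eps)). { apply sin_gt_0; unfold b.
    apply Rmult_lt_0_compat; [apply Rmult_lt_0_compat|]; lra. nra. }
  unfold hh. rewrite ca, sa, sb, cb.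
  replace ((0 * sin (a * eps) + INR s * - (-1) ^ n * cos (a * eps)) *
    ((-1) ^ n * sin (b * eps) + INR s * 0 * cos (b * eps))) with
    (- (INR s * cos (a*eps) * sin (b*eps)) * ((-1)^n * (-1)^n)) by ring.
  rewrite m1sq. assert (0 < INR s * cos (a*eps) * sin (b*eps)). { apply Rmult_lt_0_compat; [|auto]. apply Rmult_lt_0_compat; lra. } lra.
Qed.

Lemma sin_same_sign m k k' : INR m * PI < k < INR m * PI + PI -> INR m * PI < k' < INR m * PI + PI ->
  0 < sin k * sin k'.
Proof.
  intros h1 h2.
  replace k with ((k - INR m * PI) + INR m * PI) by ring.
  replace k' with ((k' - INR m * PI) + INR m * PI) by ring.
  rewrite !sin_shift.
  replace ((-1) ^ m * sin (k - INR m * PI) * ((-1) ^ m * sin (k' - INR m * PI))) with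
    (((-1)^m * (-1)^m) * (sin (k - INR m * PI) * sin (k' - INR m * PI))) by ring.
  rewrite m1sq, Rmult_1_l. apply Rmult_lt_0_compat; apply sin_gt_0; lra.
Qed.

Lemma root_unique_lt s eps m k k' : (1 <= s)%nat -> 0 < eps ->
  INR m * PI < k < INR m * PI + PI -> INR m * PI < k' < INR m * PI + PI ->
  0 < k -> k' * eps < PI -> k < k' -> hh s eps k = 0 -> hh s eps k' = 0 -> False.
Proof.
  intros hs he h1 h2 hk hk' hlt E E'.
  assert (hs' : 1 <= INR s) by (apply (le_INR 1); auto).
  assert (Hid : sin (k' - k) * sin (k*eps) * sin (k'*eps) =
     - INR s * (sin k * sin k') * sin (k'*eps - k*eps)).
  { rewrite sin_minus, sin_minus. unfold hh in E, E'.
    replace (cos k) with (cos k) in E by auto.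
    transitivity (sin k' * sin (k'*eps) * (cos k * sin (k*eps)) - sin k * sin (k*eps) * (cos k' * sin (k'*eps))).
    ring. rewrite (Rplus_eq_reg_r (INR s * sin k * cos (k*eps)) (cos k * sin (k*eps)) (- (INR s * sin k * cos (k*eps)))).
    rewrite (Rplus_eq_reg_r (INR s * sin k' * cos (k'*eps)) (cos k' * sin (k'*eps)) (- (INR s * sin k' * cos (k'*eps)))).
    ring. lra. lra. }
  assert (a1 : 0 < sin (k' - k)) by (apply sin_gt_0; lra).
  assert (a2 : 0 < sin (k*eps)) by (apply sin_gt_0; nra).
  assert (a3 : 0 < sin (k'*eps)) by (apply sin_gt_0; nra).
  assert (a4 : 0 < sin k * sin k') by (apply (sin_same_sign m); auto).
  assert (a5 : 0 < sin (k'*eps - k*eps)) by (apply sin_gt_0; nra).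
  assert (0 < sin (k' - k) * sin (k*eps) * sin (k'*eps)) by (apply Rmult_lt_0_compat; [apply Rmult_lt_0_compat|]; auto).
  assert (0 < INR s * (sin k * sin k') * sin (k'*eps - k*eps)) by (apply Rmult_lt_0_compat; [apply Rmult_lt_0_compat|]; lra).
  lra.
Qed.

Lemma root_unique s eps m k k' : (1 <= s)%nat -> 0 < eps ->
  INR m * PI < k < INR m * PI + PI -> INR m * PI < k' < INR m * PI + PI ->
  k * eps < PI -> k' * eps < PI -> hh s eps k = 0 -> hh s eps k' = 0 -> k = k'.
Proof.
  intros. pose proof PI_RGT_0. assert (0 <= INR m) by apply pos_INR.
  destruct (Rtotal_order k k') as [h|[h|h]]; auto.
  - exfalso. apply (root_unique_lt s eps m k k'); auto; nra.
  - exfalso. apply (root_unique_lt s eps m k' k); auto; nra.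
Qed.

Lemma locate k : 0 < k -> exists m : nat, INR m * PI <= k < INR m * PI + PI.
Proof.
  intros hk. pose proof PI_RGT_0.
  destruct (INR_archimed PI k) as [N hN]; [lra|].
  revert hN. induction N; intros hN.
  - simpl in hN. lra.
  - destruct (Rlt_or_le k (INR N * PI)) as [h|h]; auto.
    exists N. rewrite S_INR in hN. lra.
Qed.

Lemma hh_mult_nz s eps m : 0 < INR m * PI * eps < PI -> hh s eps (INR m * PI) <> 0.
Proof.
  intros h. unfold hh.
  replace (INR m * PI) with (0 + INR m * PI) by ring.
  rewrite sin_shift, cos_shift, sin_0, cos_0. rewrite Rplus_0_l.
  assert (0 < sin (INR m * PI * eps)) by (apply sin_gt_0; lra).
  intro E. pose proof (m1sq m) as Q. set (q := (-1)^m) in *.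
  set (X := sin (INR m * PI * eps)) in *. 
  assert (E1 : q * X = 0) by (rewrite <- E; ring).
  assert (q * (q * X) = 0) by (rewrite E1; ring). rewrite <- Rmult_assoc, Q in H0. lra.
Qed.

From Stdlib Require Import Classical IndefiniteDescription ZArith.

Lemma fsum_one n g i : (i < n)%nat -> (forall m, (m < n)%nat -> m <> i -> g m = 0) -> fsum n g = g i.
Proof.
  induction n; intros hi H; [lia|]. simpl.
  destruct (Nat.eq_dec i n).
  - subst. rewrite fsum_zero. ring. intros; apply H; lia.
  - rewrite IHn; [|lia|intros; apply H; lia]. rewrite (H n); [ring|lia|auto].
Qed.

Lemma fsum_two n g i j : (i < j < n)%nat -> (forall m, (m < n)%nat -> m <> i -> m <> j -> g m = 0) ->
  fsum n g = g i + g j.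
Proof.
  induction n; intros hij H; [lia|]. simpl.
  destruct (Nat.eq_dec j n).
  - subst. rewrite (fsum_one n g i); [ring|lia|]. intros; apply H; lia.
  - rewrite IHn; [|lia|intros; apply H; lia]. rewrite (H n); [ring|lia|lia|auto].
Qed.

Lemma php n : forall f : nat -> nat, (forall i, (i < S n)%nat -> (f i < n)%nat) ->
  exists i j, (i < j < S n)%nat /\ f i = f j.
Proof.
  induction n; intros f H.
  - specialize (H 0%nat). lia.
  - destruct (classic (exists i, (i < S n)%nat /\ f i = f (S n))) as [[i [hi E]]|hno].
    + exists i, (S n). split; [lia|auto].
    + set (g := fun i => if Nat.ltb (f i) (f (S n)) then f i else (f i - 1)%nat).
      destruct (IHn g) as [i [j [hij E]]].
      * intros i hi. unfold g. assert (f i <> f (S n)) by (intro; apply hno; exists i; split; auto).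
        assert (f i < S n)%nat by (apply H; lia). assert (f (S n) < S n)%nat by (apply H; lia).
        destruct (Nat.ltb_spec (f i) (f (S n))); lia.
      * exists i, j. split; [lia|].
        assert (f i <> f (S n)) by (intro; apply hno; exists i; split; auto; lia).
        assert (f j <> f (S n)) by (intro; apply hno; exists j; split; auto; lia).
        unfold g in E. destruct (Nat.ltb_spec (f i) (f (S n))), (Nat.ltb_spec (f j) (f (S n))); lia.
Qed.

Lemma root_class s eps ka : 0 < eps -> 0 < ka -> ka * eps < PI -> hh s eps ka = 0 ->
  exists m : nat, INR m * PI < ka < INR m * PI + PI.
Proof.
  intros he hk hke E. destruct (locate ka hk) as [m [h1 h2]].
  exists m. split; auto. destruct h1 as [h1|h1]; auto.
  exfalso. apply (hh_mult_nz s eps m). rewrite h1. split; auto. nra. rewrite h1; auto.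
Qed.

Lemma indep_Phis s eps n kk : 0 < eps -> (forall i, (i < n)%nat -> 0 < kk i) ->
  (forall i, (i < n)%nat -> 0 < sin (kk i * eps)) -> (forall i j, (i < j < n)%nat -> kk i < kk j) ->
  indep s eps n (fun i => Phi eps (kk i)).
Proof.
  intros he hp hs hinc c Hc i hi.
  assert (Z : forall j, (j < n)%nat -> c j * sin (kk j * eps) = 0).
  { apply (sin_indep n (fun j => c j * sin (kk j * eps)) kk 0 1); auto. lra.
    intros y hy. rewrite <- (Hc 0%nat (1 - y)); [|lia|unfold len; simpl; lra].
    apply fsum_ext. intros j hj. unfold Phi. simpl. replace (1 - (1 - y)) with y by ring. ring. }
  specialize (Z i hi). specialize (hs i hi). apply Rmult_integral in Z. destruct Z; auto. lra.
Qed.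

Lemma Phi_nz eps k : 0 < sin (k * eps) -> sin k <> 0 -> Phi eps k 0%nat 0 <> 0.
Proof. intros h1 h2. unfold Phi. simpl. rewrite Rminus_0_r, Rmult_1_r. intro E. apply Rmult_integral in E. destruct E; auto. lra. Qed.

Theorem lemma15 (s M : nat) (hs : (1 <= s)%nat) (hM : (1 <= M)%nat) :
  exists eps : R, 0 < eps /\
    forall n : nat, (1 <= n <= M)%nat ->
      exists lam : R,
        nth_eig s eps n lam /\
        simple_eig s eps lam /\
        (forall F : gfun, eigfun s eps lam F ->
           perm_invariant s eps F /\
           exactly_zeros_long (n - 1) F /\
           no_zeros_small s eps F).
Proof.
  pose proof PI_RGT_0 as hPI.
  assert (hs' : 1 <= INR s) by (apply (le_INR 1); auto).
  assert (hM1 : 0 < INR M + 1) by (pose proof (pos_INR M); lra).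
  set (eps := / (2 * (INR M + 1))).
  assert (he : 0 < eps) by (unfold eps; apply Rinv_0_lt_compat; lra).
  assert (hne : forall n, (n <= M)%nat -> INR n * eps < /2).
  { intros n hn. apply le_INR in hn.
    assert (eps * (INR M + 1) = /2) by (unfold eps; field; lra). nra. }
  destruct (functional_choice (fun n k => (1 <= n <= M)%nat ->
      INR n * PI - PI/2 < k < INR n * PI /\ hh s eps k = 0)) as [kf Hkf].
  { intro n. destruct (Compare_dec.le_dec 1 n); [destruct (Compare_dec.le_dec n M)|].
    - destruct (root_exists s eps n) as [k Hk]; auto. exists k; auto.
    - exists 0. intro; lia.
    - exists 0. intro; lia. }
  assert (Kall : forall j, (1 <= j <= M)%nat ->
     0 < kf j /\ kf j * eps < PI/2 /\ 0 < sin (kf j * eps) /\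
     INR (j-1) * PI < kf j < INR (j-1) * PI + PI /\ sin (kf j) <> 0 /\ hh s eps (kf j) = 0 /\
     INR j * PI - PI/2 < kf j < INR j * PI).
  { intros j hj. destruct (Hkf j hj) as [[h1 h2] h3].
    assert (hj' : 1 <= INR j) by (apply (le_INR 1); lia).
    assert (hje := hne j ltac:(lia)).
    assert (Hm : INR (j-1) = INR j - 1) by (rewrite minus_INR by lia; simpl; ring).
    assert (PI <= INR j * PI) by nra. assert (0 < kf j) by lra.
    assert (kf j * eps < PI/2).
    { apply Rlt_le_trans with (INR j * PI * eps). apply Rmult_lt_compat_r; lra.
      assert (INR j * eps * PI <= /2 * PI) by (apply Rmult_le_compat_r; lra). lra. }
    assert (INR (j-1) * PI < kf j < INR (j-1) * PI + PI) by (rewrite Hm; lra).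
    repeat split; auto; try lra.
    - apply sin_gt_0; nra.
    - intro E. assert (0 < sin (kf j) * sin (kf j)) by (apply (sin_same_sign (j-1)); auto).
      rewrite E in H3. lra. }
  assert (Kinc : forall i j, (1 <= i)%nat -> (i < j <= M)%nat -> kf i < kf j).
  { intros i j hi hij. destruct (Kall i ltac:(lia)) as [_ [_ [_ [_ [_ [_ [_ a]]]]]]].
    destruct (Kall j ltac:(lia)) as [_ [_ [_ [_ [_ [_ [b _]]]]]]].
    assert (INR (S i) <= INR j) by (apply le_INR; lia). rewrite S_INR in H. nra. }
  exists eps. split; [exact he|]. intros n hn. set (k := kf n).
  destruct (Kall n hn) as [kp [kpe [kse [[ki1 ki2] [ksn [khh [kn1 kn2]]]]]]]. fold k in kp, kpe, kse, ki1, ki2, ksn, khh, kn1, kn2.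
  assert (CL : forall F, in_eigspace s eps (k*k) F -> exists c, forall e x, (e <= s)%nat -> F e x = c * Phi eps k e x).
  { intros F HF. destruct (classify s eps k F kp kse HF) as [c [Hc _]]. exists c; auto. }
  assert (NZc : forall F c, eigfun s eps (k*k) F -> (forall e x, (e <= s)%nat -> F e x = c * Phi eps k e x) -> c <> 0).
  { intros F c [_ [e [x [h1 [h2 h3]]]]] Hc E. apply h3. rewrite Hc, E by auto. ring. }
  assert (Peig : eigfun s eps (k*k) (Phi eps k)).
  { split. apply Phi_eig; auto. exists 0%nat, 0. split; [lia|]. split. unfold len; simpl; lra. apply Phi_nz; auto. }
  exists (k*k). split; [|split].
  - split; [exists (Phi eps k); exact Peig|split].
    + exists (fun i => kf (S i) * kf (S i)), (fun i => Phi eps (kf (S i))). split.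
      * intros i hi. destruct (Kall (S i) ltac:(lia)) as [a1 [a2 [a3 [a4 [a5 [a6 a7]]]]]]. split.
        -- destruct (Nat.eq_dec (S i) n) as [E|E].
           ++ unfold k; rewrite E; lra.
           ++ assert (kf (S i) < k) by (apply Kinc; lia). nra.
        -- split. apply Phi_eig; auto. exists 0%nat, 0. split; [lia|]. split. unfold len; simpl; lra. apply Phi_nz; tauto.
      * apply indep_Phis; auto.
        -- intros i hi; apply (Kall (S i)); lia.
        -- intros i hi; apply (Kall (S i)); lia.
        -- intros i j hij. apply Kinc; lia.
    + intros [lams [Fs [HF Hind]]].
      assert (Hp : forall i, (i < n)%nat -> exists m ka c, (m < n - 1)%nat /\ 0 < ka /\ ka * eps < PI /\
          INR m * PI < ka < INR m * PI + PI /\ hh s eps ka = 0 /\ c <> 0 /\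
          forall e x, (e <= s)%nat -> Fs i e x = c * Phi eps ka e x).
      { intros i hi. destruct (HF i hi) as [hl [Hsp Hnz]].
        destruct (Rle_or_lt (lams i) 0) as [hneg|hpos].
        - exfalso. destruct Hnz as [e [x [h1 [h2 h3]]]]. apply h3. apply (nonpos_eig s eps (lams i)); auto.
        - set (ka := sqrt (lams i)).
          assert (hka : ka * ka = lams i) by (apply sqrt_sqrt; lra).
          assert (kap : 0 < ka) by (apply sqrt_lt_R0; auto).
          assert (kak : ka < k) by nra.
          assert (kae : ka * eps < PI) by nra.
          rewrite <- hka in Hsp.
          destruct (classify s eps ka (Fs i) kap ltac:(apply sin_gt_0; nra) Hsp) as [c [Hc Hch]].
          assert (cnz : c <> 0).
          { intro E. destruct Hnz as [e [x [h1 [h2 h3]]]]. apply h3. rewrite Hc, E by auto. ring. }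
          assert (hhz : hh s eps ka = 0).
          { apply Rmult_integral in Hch. destruct Hch; [contradiction|auto]. }
          destruct (root_class s eps ka he kap kae hhz) as [m hm].
          exists m, ka, c. repeat split; auto; try lra.
          assert (m < n)%nat.
          { assert (INR m * PI < INR n * PI) by lra.
            apply INR_lt. nra. }
          destruct (Nat.eq_dec m (n-1)) as [Em|Em]; [|lia].
          exfalso. subst m. assert (ka = k). { apply (root_unique s eps (n-1)); auto; lra. } lra. }
      destruct (functional_choice (fun i m => (i < n)%nat -> exists ka c, (m < n - 1)%nat /\ 0 < ka /\ ka * eps < PI /\
          INR m * PI < ka < INR m * PI + PI /\ hh s eps ka = 0 /\ c <> 0 /\
          forall e x, (e <= s)%nat -> Fs i e x = c * Phi eps ka e x)) as [mf Hmf].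
      { intro i. destruct (Compare_dec.lt_dec i n) as [hi|hi].
        - destruct (Hp i hi) as [m Hm]. exists m. intros _. exact Hm.
        - exists 0%nat. intro; lia. }
      destruct (php (n-1) mf) as [i [j [hij Eij]]].
      { intros i hi. destruct (Hmf i ltac:(lia)) as [ka [c [h _]]]. lia. }
      destruct (Hmf i ltac:(lia)) as [ka [c [_ [kap [kae [kai [kah [cnz Hc]]]]]]]].
      destruct (Hmf j ltac:(lia)) as [ka' [c' [_ [kap' [kae' [kai' [kah' [cnz' Hc']]]]]]]].
      rewrite <- Eij in kai'.
      assert (ka = ka') by (apply (root_unique s eps (mf i)); auto).
      subst ka'.
      set (d := fun m => if Nat.eqb m i then c' else if Nat.eqb m j then - c else 0).
      assert (Hd := Hind d).
      assert (Hdi : d i = 0).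
      { apply Hd; [|lia]. intros e x he' hx.
        rewrite (fsum_two _ _ i j); [|lia|].
        - unfold d. rewrite Nat.eqb_refl. destruct (Nat.eqb_spec j i); [lia|]. rewrite Nat.eqb_refl.
          rewrite Hc, Hc' by auto. ring.
        - intros m hm h1 h2. unfold d. destruct (Nat.eqb_spec m i); [lia|]. destruct (Nat.eqb_spec m j); [lia|]. ring. }
      unfold d in Hdi. rewrite Nat.eqb_refl in Hdi. contradiction.
  - split.
    + exists (fun _ => Phi eps k). split. intros; apply Phi_eig; auto.
      intros c Hc i hi. assert (i = 0%nat) by lia. subst i.
      specialize (Hc 0%nat 0 ltac:(lia) ltac:(unfold len; simpl; lra)). simpl in Hc.
      rewrite Rplus_0_l in Hc. apply Rmult_integral in Hc. destruct Hc; auto. exfalso; apply (Phi_nz eps k); auto.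
    + intros [Fs [HF Hind]].
      destruct (CL (Fs 0%nat) (HF 0%nat ltac:(lia))) as [c1 H1].
      destruct (CL (Fs 1%nat) (HF 1%nat ltac:(lia))) as [c2 H2].
      destruct (Req_dec c1 0) as [z|z].
      * assert (E : (fun i => if Nat.eqb i 0 then 1 else 0) 0%nat = 0).
        { apply (Hind (fun i => if Nat.eqb i 0 then 1 else 0)); [|lia].
          intros e x he' hx. simpl. rewrite H1 by auto. rewrite z. ring. }
        simpl in E. lra.
      * apply z. assert (E : (fun i => if Nat.eqb i 0 then c2 else - c1) 1%nat = 0).
        { apply (Hind (fun i => if Nat.eqb i 0 then c2 else - c1)); [|lia].
          intros e x he' hx. simpl. rewrite H1, H2 by auto. ring. }
        simpl in E. lra.
  - intros F HFe. pose proof HFe as HFe'. destruct HFe as [HFs HFn].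
    destruct (CL F HFs) as [c Hc].
    assert (cnz : c <> 0) by (apply (NZc F c); auto).
    split; [|split].
    + intros sigma hs1 hs2 i x hi hx. destruct (hs1 i hi) as [a b].
      rewrite !Hc by lia.
      unfold Phi. destruct (Nat.eqb_spec (sigma i) 0); [lia|]. destruct (Nat.eqb_spec i 0); [lia|]. reflexivity.
    + exists (fun i => 1 - INR (n - 1 - i) * PI / k). split; [|split].
      * intros i hi.
        assert (h1 : 1 <= INR (n-1-i)) by (apply (le_INR 1); lia).
        assert (h2 : INR (n-1-i) <= INR (n-1)) by (apply le_INR; lia).
        assert (INR (n-1-i) * PI / k < 1).
        { apply (Rmult_lt_reg_r k); auto. unfold Rdiv. rewrite Rmult_assoc, Rinv_l, Rmult_1_r by lra. nra. }
        assert (0 < INR (n-1-i) * PI / k).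
        { unfold Rdiv. apply Rmult_lt_0_compat; [nra|apply Rinv_0_lt_compat; lra]. }
        split; [lra|].
        rewrite Hc by lia. unfold Phi; simpl.
        replace (k * (1 - (1 - INR (n - 1 - i) * PI / k))) with (0 + INR (n-1-i) * PI) by (field; lra).
        rewrite sin_shift, sin_0. ring.
      * intros i hi. assert (HH : INR (n-1-S i) + 1 = INR (n-1-i)) by (rewrite <- S_INR; f_equal; lia).
        assert (PI / k > 0) by (unfold Rdiv; apply Rmult_lt_0_compat; [lra|apply Rinv_0_lt_compat; lra]).
        rewrite <- HH. unfold Rdiv in *. nra.
      * intros x hx Ex. rewrite Hc in Ex by lia. unfold Phi in Ex; simpl in Ex.
        assert (Hs0 : sin (k * (1 - x)) = 0).
        { apply Rmult_integral in Ex. destruct Ex as [E|E]; [contradiction|].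
          apply Rmult_integral in E. destruct E; [lra|auto]. }
        destruct (sin_eq_0_0 _ Hs0) as [z Hz].
        assert (zp : 0 < IZR z). { assert (0 < k * (1 - x)) by nra. nra. }
        assert (zn : IZR z < INR n). { assert (k * (1 - x) < k) by nra. nra. }
        apply lt_IZR in zp. rewrite INR_IZR_INZ in zn. apply lt_IZR in zn.
        exists (n - 1 - Z.to_nat z)%nat. split; [lia|].
        assert (HI : INR (n - 1 - (n - 1 - Z.to_nat z)) = IZR z).
        { replace (n - 1 - (n - 1 - Z.to_nat z))%nat with (Z.to_nat z) by lia.
          rewrite INR_IZR_INZ, Z2Nat.id by lia. reflexivity. }
        rewrite HI. rewrite <- Hz. field. lra.
    + split.
      * rewrite Hc by lia. intro E. apply Rmult_integral in E. destruct E; [contradiction|]. apply (Phi_nz eps k); auto.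
      * intros e x he' hx. rewrite Hc by lia. unfold Phi. destruct (Nat.eqb_spec e 0); [lia|].
        assert (0 < sin (k * (eps - x))) by (apply sin_gt_0; nra).
        intro E. apply Rmult_integral in E. destruct E as [E|E]; [contradiction|].
        apply Rmult_integral in E. destruct E; [contradiction|lra].
Qed.
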